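(* For every $m\in\mathbb{N}$, $\mathscr{G}^{(m)}\setminus\mathscr{G}^{(m-1)}\neq\emptyset$. In particular, if $K_{m+1}$ denotes the complete graph on $m+1$ vertices, then $K_{m+1}\in\mathscr{G}^{(m)}\setminus\mathscr{G}^{(m-1)}$.
   Context: All graphs are finite simplicial graphs (undirected, no loops, at most one edge between two vertices). Pinning: for graphs $\Gamma,\Gamma'$ and $v\in V\Gamma$, the graph $\Phi_{(\Gamma,v)}(\Gamma')$ has vertex set $V\Gamma\sqcup V\Gamma'$ and edge set $E\Gamma\sqcup E\Gamma'\sqcup\{(w,v):w\in V\Gamma'\}$ (''pinning $\Gamma'$ to $\Gamma$ at $v$''). Let $\mathscr{G}^{(0)}$ consist of the single-vertex graph. Recursively, $\mathscr{G}^{(m+1)}$ is the class of graphs obtained by repeatedly appending a graph from $\mathscr{G}^{(m)}$ to the graph built so far, each time either (1) leaving the appended graph disjoint (no edges to the previous graph), or (2) pinning the appended graph to the previous graph at some vertex. Thus $\mathscr{G}^{(1)}$ consists of graphs built by successively adding a vertex that is either isolated or adjacent to exactly one existing vertex. *)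

(* Defs.v *)
From mathcomp Require Import all_boot.
Set Implicit Arguments. Unset Strict Implicit. Unset Printing Implicit Defensive.

(* A finite graph on the vertex set 'I_gn with adjacency relation gadj.
   All graphs produced below are simple (symmetric, irreflexive). *)
Record graph := Graph { gn : nat; gadj : rel 'I_gn }.
Arguments gadj : clear implicits.

Definition simple_graph (G : graph) : Prop :=
  (forall x y, gadj G x y = gadj G y x) /\ (forall x, gadj G x x = false).

Definition graph_iso (G H : graph) : Prop :=
  exists f : 'I_(gn G) -> 'I_(gn H),
    bijective f /\ forall x y, gadj H (f x) (f y) = gadj G x y.

Definition disj_union (G H : graph) : graph :=
  @Graph (gn G + gn H) (fun x y =>
    match split x, split y with
    | inl a, inl b => gadj G a b
    | inr a, inr b => gadj H a b
    | _, _ => false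
    end).

Definition pin (G : graph) (v : 'I_(gn G)) (H : graph) : graph :=
  @Graph (gn G + gn H) (fun x y =>
    match split x, split y with
    | inl a, inl b => gadj G a b
    | inr a, inr b => gadj H a b
    | inl a, inr _ => a == v
    | inr _, inl b => b == v
    end).

Definition single_vertex : graph := @Graph 1 (fun _ _ => false).

Definition complete_graph (n : nat) : graph := @Graph n (fun x y => x != y).

Inductive built : nat -> graph -> Prop :=
| built0 : built 0 single_vertex
| built_start m G : built m G -> built m.+1 G
| built_disj m G H : built m.+1 G -> built m H -> built m.+1 (disj_union G H)
| built_pin m G (v : 'I_(gn G)) H :
    built m.+1 G -> built m H -> built m.+1 (pin v H).

Definition inG (m : nat) (G : graph) : Prop :=
  exists G0, built m G0 /\ graph_iso G G0.

(* Main.v *)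
Require Import Defs.
From mathcomp Require Import all_boot.

Definition clique {G : graph} (S : {set 'I_(gn G)}) :=
  forall x y, x \in S -> y \in S -> x != y -> gadj G x y.

Definition omega_le k (G : graph) := forall S : {set 'I_(gn G)}, clique S -> #|S| <= k.

Lemma card_split n1 n2 (S : {set 'I_(n1 + n2)}) :
  #|S| = #|[set a | lshift n2 a \in S]| + #|[set b | rshift n1 b \in S]|.
Proof.
rewrite -!sum1_card big_split_ord /=.
by congr (_ + _); apply: eq_bigl => i; rewrite inE.
Qed.

Lemma split_l n1 n2 (a : 'I_n1) : split (lshift n2 a) = inl a.
Proof. exact: (unsplitK (inl a)). Qed.
Lemma split_r n1 n2 (b : 'I_n2) : split (rshift n1 b) = inr b.
Proof. exact: (unsplitK (inr b)). Qed.

Lemma lshift_neq_rshift {n1 n2} (a : 'I_n1) (b : 'I_n2) : lshift n2 a != rshift n1 b.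
Proof. by rewrite -val_eqE /= neq_ltn ltn_addr. Qed.

Lemma built_omega m G : built m G -> omega_le m.+1 G.
Proof.
elim => {m G}.
- by move=> S _; apply: leq_trans (max_card _) _; rewrite card_ord.
- by move=> m G _ IH S /IH /leq_trans; apply.
- move=> m G H _ IHG _ IHH S cS; rewrite card_split.
  set L := [set a | _]; set R := [set b | _].
  have cL : clique L.
    move=> x y; rewrite !inE => xS yS xy.
    have := cS _ _ xS yS; rewrite /= !split_l; apply.
    by apply: contra xy => /eqP/lshift_inj ->.
  have cR : clique R.
    move=> x y; rewrite !inE => xS yS xy.
    have := cS _ _ xS yS; rewrite /= !split_r; apply.
    by apply: contra xy => /eqP/rshift_inj ->.
  case: (set_0Vmem R) => [->|[b bR]].
    by rewrite cards0 addn0; apply: IHG.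
  case: (set_0Vmem L) => [->|[a aL]].
    by rewrite cards0 add0n; apply: leq_trans (IHH _ cR) _.
  move: aL bR; rewrite !inE => aS bS.
  have := cS _ _ aS bS (lshift_neq_rshift a b).
  by rewrite /= split_l split_r.
- move=> m G v H _ IHG _ IHH S cS; rewrite card_split.
  set L := [set a | _]; set R := [set b | _].
  have cL : clique L.
    move=> x y; rewrite !inE => xS yS xy.
    have := cS _ _ xS yS; rewrite /= !split_l; apply.
    by apply: contra xy => /eqP/lshift_inj ->.
  have cR : clique R.
    move=> x y; rewrite !inE => xS yS xy.
    have := cS _ _ xS yS; rewrite /= !split_r; apply.
    by apply: contra xy => /eqP/rshift_inj ->.
  case: (set_0Vmem R) => [->|[b bR]].
    by rewrite cards0 addn0; apply: IHG.
  have LS : L \subset [set v].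
    apply/subsetP => a; rewrite /L inE => aS; move: bR; rewrite /R inE => bS.
    have := cS _ _ aS bS (lshift_neq_rshift a b).
    by rewrite /= split_l split_r inE.
  have := subset_leq_card LS; rewrite cards1 => L1.
  rewrite -[m.+2]/(1 + m.+1); apply: leq_add => //; exact: IHH.
Qed.

Lemma single_built k : built k single_vertex.
Proof. by elim: k => [|k IH]; [exact: built0 | exact: built_start]. Qed.

Lemma complete_built k :
  exists G, built k G /\ gn G = k.+1 /\ forall x y, gadj G x y = (x != y).
Proof.
elim: k => [|k [G [bG [nG aG]]]].
  exists single_vertex; split; first exact: built0; split => //.
  by move=> x y /=; rewrite !ord1.
exists (pin (ord0 : 'I_(gn single_vertex)) G); split.
  by apply: built_pin => //; exact: single_built.
split; first by rewrite /= nG.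
move=> x y /=.
case: splitP => [a ex|a ex]; case: splitP => [b ey|b ey].
- by move: a b ex ey; rewrite /= => a b; rewrite !ord1 -val_eqE /= => -> ->.
- by rewrite ord1 eqxx -val_eqE /= ex ey ord1.
- by rewrite ord1 eqxx -val_eqE /= ex ey ord1.
- by rewrite aG -!val_eqE /= ex ey eqn_add2l.
Qed.

Lemma complete_in k : inG k (complete_graph k.+1).
Proof.
have [G [bG [nG aG]]] := complete_built k.
exists G; split => //.
exists (cast_ord (esym nG)); split.
  by exists (cast_ord nG) => x; rewrite ?cast_ordK ?cast_ordKV.
by move=> x y; rewrite aG /= (inj_eq (@cast_ord_inj _ _ _)).
Qed.

Lemma complete_notin k : ~ inG k (complete_graph k.+2).
Proof.
move=> [G0 [bG [f [bf af]]]].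
have cS : clique (f @: setT).
  move=> x y /imsetP [x' _ ->] /imsetP [y' _ ->] xy.
  rewrite af /=; apply: contra xy => /eqP -> //.
have := @built_omega _ _ bG _ cS; rewrite card_imset ?cardsT ?card_ord ?ltnn //.
exact: bij_inj.
Qed.

Theorem proposition2p7 (m : nat) (hm : 0 < m) :
  (exists G : graph, inG m G /\ ~ inG m.-1 G) /\
  (inG m (complete_graph m.+1) /\ ~ inG m.-1 (complete_graph m.+1)).
Proof.
case: m hm => // n _ /=.
have H : inG n.+1 (complete_graph n.+2) /\ ~ inG n (complete_graph n.+2).
  by split; [exact: complete_in | exact: complete_notin].
by split => //; exists (complete_graph n.+2).
Qed.
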